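(* Let $e_1,\dots,e_d$ be the standard basis of $\mathbb{R}^d$ and put $w_i=\lambda_i(e_1+\dots+e_i)$ for $i\in[1,d]$, where $\lambda_1\ge\lambda_2\ge\dots\ge\lambda_d>0$. Then the affine hyperplane $\mathcal H$ through $w_1,\dots,w_d$ intersects the set $Q=\lambda_d(e_1+\dots+e_d)-\mathbb{R}_+^d$ only in its boundary $\partial Q$. In particular, the Euclidean distance from $O$ to $\mathcal H$ is at least $\lambda_d$. *)

(* Defs.v *)
From HB Require Import structures.
From mathcomp Require Import all_boot all_order all_algebra.
From mathcomp Require Import all_classical all_reals all_analysis.
Set Implicit Arguments. Unset Strict Implicit. Unset Printing Implicit Defensive.
Import Order.TTheory GRing.Theory Num.Theory.
Import numFieldNormedType.Exports.
Local Open Scope classical_set_scope.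
Local Open Scope ring_scope.

Definition ebasis (R : realType) (d : nat) (i : 'I_d) : 'rV[R]_d := delta_mx 0 i.

Definition wvec (R : realType) (d : nat) (lam : 'I_d -> R) (i : 'I_d) : 'rV[R]_d :=
  lam i *: \sum_(j < d | (j <= i)%N) ebasis R j.

Definition affine_hull (R : realType) (d k : nat) (v : 'I_k -> 'rV[R]_d) : set 'rV[R]_d :=
  [set x | exists c : 'I_k -> R, \sum_(i < k) c i = 1 /\ x = \sum_(i < k) c i *: v i].

Definition Qset (R : realType) (d : nat) (a : R) : set 'rV[R]_d :=
  [set x | exists y : 'rV[R]_d, (forall j, 0 <= y 0 j) /\
                                 x = a *: \sum_(j < d) ebasis R j - y].

Definition boundary (T : topologicalType) (A : set T) : set T :=
  closure A `\` interior A.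

Definition eucl_norm (R : realType) (d : nat) (x : 'rV[R]_d) : R :=
  Num.sqrt (\sum_(j < d) x 0 j ^+ 2).

(* Main.v *)
Require Import Defs.
From HB Require Import structures.
From mathcomp Require Import all_boot all_order all_algebra.
From mathcomp Require Import all_classical all_reals all_analysis.
From mathcomp Require Import lra ring.
Import Order.TTheory GRing.Theory Num.Theory.
Import numFieldNormedType.Exports.
Local Open Scope classical_set_scope.
Local Open Scope ring_scope.

Lemma interior_shift (R : realType) (n : nat) (A : set 'rV[R]_n.+1) (x v : 'rV[R]_n.+1) :
  interior A x -> exists t : R, 0 < t /\ A (x + t *: v).
Proof.
move=> hA.
have H : (fun t : R => x + t *: v) @ (0:R) --> x.
  suff : (fun t : R => x + t *: v) @ (0:R) --> x + 0 *: v by rewrite scale0r addr0.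
  apply: cvgD; first exact: cvg_cst.
  apply: cvgZr_tmp. exact: cvg_id.
have := H A hA.
move=> /nbhs_ballP [e /= e0 He].
exists (e / 2); split; first by lra.
apply: He. rewrite /ball /= sub0r normrN ger0_norm; lra.
Qed.

Lemma ebasis_sum_entry (R : realType) (d : nat) (P : pred 'I_d) (k : 'I_d) :
  (\sum_(j < d | P j) ebasis R j) 0 k = (P k)%:R.
Proof.
rewrite summxE.
under eq_bigr do rewrite /ebasis mxE eqxx /=.
case Pk: (P k).
  rewrite (bigD1 k) //= eqxx big1 ?addr0 // => j /andP[_ hj].
  by rewrite eq_sym (negbTE hj).
rewrite big1 // => j Pj.
case: eqP => // ekj; by rewrite -ekj Pk in Pj.
Qed.

Lemma wvec_entry (R : realType) (n : nat) (lam : 'I_n.+1 -> R) i k :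
  wvec lam i 0 k = lam i * (k <= i)%N%:R.
Proof. by rewrite /wvec mxE ebasis_sum_entry. Qed.

Lemma ones_entry (R : realType) (n : nat) (k : 'I_n.+1) :
  (\sum_(j < n.+1) ebasis R j) 0 k = 1.
Proof. by rewrite ebasis_sum_entry. Qed.

Theorem lemma2p4 (R : realType) (n : nat) (lam : 'I_n.+1 -> R)
  (hmono : forall i j : 'I_n.+1, (i <= j)%N -> lam j <= lam i)
  (hpos : 0 < lam ord_max) :
  (affine_hull (wvec lam) `&` @Qset R n.+1 (lam ord_max)
     `<=` boundary (@Qset R n.+1 (lam ord_max)))
  /\ (forall x, affine_hull (wvec lam) x -> lam ord_max <= eucl_norm x).
Proof.
set lm := lam ord_max.
have lpos : forall i, 0 < lam i.
  move=> i; apply: lt_le_trans hpos _; apply: hmono; exact: leq_ord.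
pose L (k : nat) := lam (inord k).
pose b (k : nat) := if k is k'.+1 then (L k')^-1 else 0.
pose a (j : 'I_n.+1) := b j.+1 - b j.
have prefix : forall i : 'I_n.+1, \sum_(j < n.+1 | (j <= i)%N) a j = (lam i)^-1.
  move=> i.
  have := @big_ord_widen R 0 +%R i.+1 n.+1 (fun j => b j.+1 - b j) (ltn_ord i).
  rewrite /a => <-.
  rewrite -(big_mkord xpredT (fun j => b j.+1 - b j)) telescope_sumr //.
  by rewrite /b /L subr0 inord_val.
have sumall : \sum_(j < n.+1) a j = lm^-1.
  rewrite -prefix; apply: eq_bigl => j; by rewrite /= -ltnS ltn_ord.
have a_ge0 : forall j, 0 <= a j.
  move=> j; case: j => m hk; case: m hk => [|k] hk; rewrite /a /b /=.
    by rewrite subr0 invr_ge0 ltW ?lpos.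
  rewrite subr_ge0 lef_pV2 ?posrE ?lpos //.
  rewrite /L; apply: hmono; rewrite !inordK //; exact: ltnW.
have a0 : 0 < a ord0.
  by rewrite /a /b /= subr0 invr_gt0 lpos.
pose f (z : 'rV[R]_n.+1) := \sum_k a k * z 0 k.
have fhull : forall x, affine_hull (wvec lam) x -> f x = 1.
  move=> x [c [hc ->]].
  rewrite /f.
  under eq_bigr do rewrite summxE mulr_sumr.
  rewrite exchange_big /= -hc.
  have E : forall i, \sum_(k < n.+1) a k * (c i *: wvec lam i) 0 k = c i.
    move=> i.
    transitivity (c i * lam i * \sum_(k < n.+1 | (k <= i)%N) a k).
      rewrite mulr_sumr [RHS]big_mkcond /=; apply: eq_bigr => k _.
      rewrite mxE wvec_entry; case: (k <= i)%N => /=; ring.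
    by rewrite prefix mulfK // gt_eqF.
  by rewrite (eq_bigr _ (fun i _ => E i)).
have fQ : forall z, Qset lm z -> f z <= 1.
  move=> z [y [hy ->]]; rewrite /f.
  under eq_bigr do rewrite !mxE ones_entry mulr1 mulrBr.
  rewrite sumrB -mulr_suml sumall mulVf ?gt_eqF //.
  rewrite lerBlDr lerDl; apply: sumr_ge0 => k _; exact: mulr_ge0.
split.
  move=> x [hx qx]; split; first exact: subset_closure.
  move=> /(@interior_shift R n _ x (\sum_(j < n.+1) ebasis R j)) [t [t0 qt]].
  have := fQ _ qt; rewrite /f.
  under eq_bigr do rewrite !mxE ones_entry mulr1 mulrDr.
  rewrite big_split /= -/(f x) fhull // -mulr_suml sumall.
  have : 0 < t * lm^-1 by rewrite mulr_gt0 // invr_gt0.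
  lra.
move=> x hx.
rewrite leNgt; apply/negP => hlt.
have xk : forall k, x 0 k < lm.
  move=> k; apply: le_lt_trans hlt.
  apply: le_trans (ler_norm _) _.
  rewrite -sqrtr_sqr /eucl_norm ler_sqrt; last first.
    by apply: sumr_ge0 => j _; exact: sqr_ge0.
  rewrite (bigD1 k) //= lerDl; apply: sumr_ge0 => j _; exact: sqr_ge0.
have : f x < 1.
  rewrite -(mulfV (lt0r_neq0 hpos)) -sumall mulr_sumr /f.
  rewrite big_ord_recl [X in _ < X]big_ord_recl.
  have h1 : a ord0 * x 0 ord0 < lam ord_max * a ord0.
    by rewrite [X in _ < X]mulrC ltr_pM2l //; exact: xk.
  have h2 : \sum_(i < n) a (lift ord0 i) * x 0 (lift ord0 i) <=
            \sum_(i < n) lam ord_max * a (lift ord0 i).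
    apply: ler_sum => k _; rewrite [X in _ <= X]mulrC.
    apply: ler_wpM2l => //; exact: ltW.
  lra.
by rewrite fhull // ltxx.
Qed.
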